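(* Let $p\in(0,1)$ and let $(\lambda_n)_{n\ge1}$ be a sequence with $\lambda_1=1$ and $0\le\lambda_n\le\lambda_{n-1}$ for all $n>1$. Let $r_1,r_2,\dots$ be $\{0,1\}$-valued random variables with $\Pr(r_1=1)=p$ and, for every $n\ge2$, $\Pr(r_n=1\mid r_1,\dots,r_{n-1})=\lambda_n p+(1-\lambda_n)\bar p_{n-1}$, where $\bar p_m=\frac1m\sum_{i=1}^m r_i$. Then for every $n\ge1$, $\mathbb{E}[\bar p_n]=\mathbb{E}[r_n]=p$.
   Context: This is a model of the bandwagon effect: $r_n$ is the $n$-th binary rating of an item, $p$ the true preference, $\bar p_m$ the sample mean of the first $m$ ratings, and $\lambda_n$ the weight the $n$-th user puts on their own preference versus the current sample mean. *)

(* Defs.v *)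
From HB Require Import structures.
From mathcomp Require Import all_boot all_order all_algebra.
From mathcomp Require Import all_classical all_reals all_analysis.
Set Implicit Arguments. Unset Strict Implicit. Unset Printing Implicit Defensive.
Import Order.TTheory GRing.Theory Num.Theory.
Local Open Scope classical_set_scope.
Local Open Scope ring_scope.

(* Ratings are 1-indexed: r n is r_n for n >= 1 (r 0 is unused). *)

Definition pbar {T : Type} {R : realType} (r : nat -> T -> R) (m : nat) (w : T) : R :=
  (\sum_(i < m) r i.+1 w) / m%:R.

Definition hist_event {T : Type} {R : realType} (r : nat -> T -> R) (s : seq bool) : set T :=
  [set w | forall i, (i < size s)%N -> r i.+1 w = (nth false s i)%:R].

(* the sample mean of a history s (the value of \bar p_{size s} on hist_event r s) *)
Definition seq_mean {R : realType} (s : seq bool) : R :=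
  (\sum_(i < size s) ((nth false s i)%:R : R)) / (size s)%:R.

(* Main.v *)
Require Import Defs.
From HB Require Import structures.
From mathcomp Require Import all_boot all_order all_algebra.
From mathcomp Require Import all_classical all_reals all_analysis.
From mathcomp Require Import measurable_realfun ring.
Import Order.TTheory GRing.Theory Num.Theory.
Local Open Scope classical_set_scope.
Local Open Scope ring_scope.

Fixpoint allseqs (k : nat) : seq (seq bool) :=
  if k is k'.+1 then flatten [seq [:: rcons s false; rcons s true] | s <- allseqs k']
  else [:: [::]].

Lemma size_allseqs k s : s \in allseqs k -> size s = k.
Proof.
elim: k s => [|k IH] s /=; first by rewrite inE => /eqP ->.
case/flatten_mapP => t /IH <-; rewrite !inE => /orP [] /eqP ->; by rewrite size_rcons.
Qed.

Arguments size_allseqs {k s}.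

Section Helpers.
Variables (d : measure_display) (T : measurableType d) (R : realType)
  (P : probability T R) (r : nat -> {RV P >-> R}).
Hypothesis r01 : forall n w, (1 <= n)%N -> r n w = 0 \/ r n w = 1.

Let H s := hist_event (fun k => (r k : T -> R)) s.

Lemma meas_eq n (c : R) : measurable [set w | r n w = c].
Proof.
have := measurable_funPT (r n) measurableT [set c] (measurable_set1 c).
by rewrite setTI.
Qed.

Lemma H_nil : H [::] = setT.
Proof. by apply/seteqP; split=> w // _ i. Qed.

Lemma H_rcons s b : H (rcons s b) = H s `&` [set w | r (size s).+1 w = b%:R].
Proof.
apply/seteqP; split=> w /=.
- move=> h; split.
    move=> i Hi; have := h i; rewrite size_rcons nth_rcons Hi; apply.
    exact: leqW.
  by have := h (size s); rewrite size_rcons ltnSn nth_rcons ltnn eqxx; apply.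
- case=> h1 h2 i; rewrite size_rcons ltnS leq_eqVlt => /orP [/eqP->|Hi].
    by rewrite nth_rcons ltnn eqxx.
  by rewrite nth_rcons Hi; apply: h1.
Qed.

Lemma H_meas s : measurable (H s).
Proof.
elim/last_ind: s => [|s b IH]; first by rewrite H_nil.
rewrite H_rcons; apply: measurableI => //; exact: meas_eq.
Qed.

Lemma H_split s : H s = H (rcons s false) `|` H (rcons s true).
Proof.
rewrite !H_rcons -setIUr.
have -> : [set w | r (size s).+1 w = false%:R] `|` [set w | r (size s).+1 w = true%:R] = setT.
  apply/seteqP; split=> w // _ /=.
  by case: (r01 (size s).+1 w isT) => ->; [left|right].
by rewrite setIT.
Qed.

Lemma H_disj s : [disjoint H (rcons s false) & H (rcons s true)].
Proof.
apply/disj_setPS; rewrite !H_rcons => w [[_ h0] [_ h1]].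
by have := etrans (esym h0) h1 => /= /eqP; rewrite eq_sym oner_eq0.
Qed.

Lemma decomp (k : nat) (f : T -> \bar R) : measurable_fun (setT : set T) (f : T -> \bar R) -> (forall x, (0 <= f x)%E) ->
  (\int[P]_(x in setT) f x = \sum_(s <- allseqs k) \int[P]_(x in H s) f x)%E.
Proof.
move=> mf f0; elim: k => [|k IH]; first by rewrite /= big_seq1 H_nil.
rewrite IH /= big_flatten big_map /=; apply: eq_bigr => s _.
rewrite big_cons big_seq1 {1}(H_split s) ge0_integral_setU //.
- exact: H_meas.
- exact: H_meas.
- exact: measurable_funS mf.
- exact: H_disj.
Qed.

Definition q s := fine (P (H s)).

Lemma qE s : P (H s) = (q s)%:E.
Proof. by rewrite /q fineK //; apply: fin_num_measure; exact: H_meas. Qed.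

Lemma intH s (c : R) : (\int[P]_(x in H s) cst c%:E x = (c * q s)%:E)%E.
Proof.
rewrite integral_cst; last exact: H_meas.
by rewrite EFinM /q fineK //; apply: fin_num_measure; exact: H_meas.
Qed.

Lemma sumq k : \sum_(s <- allseqs k) q s = 1.
Proof.
have := @decomp k (cst 1%E) (measurable_cst _) (fun _ => lee01).
have hP : ((P : {measure set T -> \bar R}) [set: T] = 1)%E by exact: probability_setT.
rewrite integral_cst // hP mule1.
under eq_bigr => s _ do rewrite intH mul1r.
rewrite sumEFin => h; apply: EFin_inj; by rewrite -h.
Qed.

Lemma Epbar k : ('E_P[pbar (fun k => (r k : T -> R)) k] =
  (\sum_(s <- allseqs k) seq_mean s * q s)%:E)%E.
Proof.
rewrite unlock (decomp k).
- rewrite -sumEFin big_seq [RHS]big_seq; apply: eq_bigr => s Hs.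
  rewrite (@eq_integral _ _ _ _ _ (cst (seq_mean s)%:E)).
    by rewrite intH.
  move=> w; rewrite inE => Hw /=; congr (_%:E).
  rewrite /pbar /seq_mean (size_allseqs Hs); congr (_ / _).
  apply: eq_bigr => i _; apply: Hw; rewrite (size_allseqs Hs); exact: ltn_ord.
- apply/measurable_EFinP; rewrite /pbar.
  apply: (@measurable_funM _ _ _ _ (fun w => \sum_(i < k) r i.+1 w) (cst _)) => //.
  by apply: measurable_sum => i; exact: measurable_funPT.
- move=> w /=; rewrite lee_fin /pbar; apply: divr_ge0 => //.
  by apply: sumr_ge0 => i _; case: (r01 i.+1 w isT) => ->.
Qed.

Lemma Er n k (c : seq bool -> R) : (1 <= n)%N ->
  (forall s, size s = k -> P (H s `&` [set w | r n w = 1]) = ((c s)%:E * P (H s))%E) ->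
  ('E_P[r n] = (\sum_(s <- allseqs k) c s * q s)%:E)%E.
Proof.
move=> n1 hc; rewrite unlock (decomp k).
- rewrite -sumEFin big_seq [RHS]big_seq; apply: eq_bigr => s Hs.
  rewrite (@eq_integral _ _ _ _ _ (fun x => (\1_[set w | r n w = 1] x)%:E)).
    rewrite integral_indic; [|exact: H_meas|exact: meas_eq]. rewrite classical_sets.setIC.
    transitivity ((c s)%:E * P (H s))%E; first exact: hc (size_allseqs Hs).
    by rewrite qE EFinM.
  move=> w _; rewrite indicE; case: (r01 n w n1) => h.
    rewrite memNset; first by rewrite h.
    by rewrite /= h => /eqP; rewrite eq_sym oner_eq0.
  by rewrite mem_set /= h.
- by apply/measurable_EFinP; exact: measurable_funPT.
- by move=> w /=; rewrite lee_fin; case: (r01 n w n1) => ->.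
Qed.

Lemma Epbar_lin n (p : R) : (0 < n)%N ->
  (forall i, (i < n)%N -> 'E_P[r i.+1] = p%:E)%E ->
  ('E_P[pbar (fun k => (r k : T -> R)) n] = p%:E)%E.
Proof.
move=> n0 hE.
have hE' : forall i : 'I_n, (\int[P]_x (r i.+1 x)%:E = p%:E)%E.
  by move=> i; have := hE i (ltn_ord i); rewrite unlock.
rewrite unlock /pbar.
under eq_integral => w _ do rewrite mulrC EFinM -sumEFin.
rewrite ge0_integralZl_EFin //.
- rewrite ge0_integral_sum //.
  + under eq_bigr => i _ do rewrite hE'.
    rewrite sumEFin sumr_const card_ord -EFinM; congr (_%:E).
    by rewrite -(mulr_natl p n) mulrA mulVf ?mul1r // pnatr_eq0 -lt0n.
  + by move=> i; apply/measurable_EFinP; exact: measurable_funPT.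
  + by move=> i w _; rewrite lee_fin; case: (r01 i.+1 w isT) => ->.
- by move=> w _; apply: sume_ge0 => i _; rewrite lee_fin; case: (r01 i.+1 w isT) => ->.
- apply: emeasurable_sum => i; apply/measurable_EFinP; exact: measurable_funPT.
Qed.

End Helpers.

Theorem theoremA1 (d : measure_display) (T : measurableType d) (R : realType)
  (P : probability T R) (p : R) (lam : nat -> R) (r : nat -> {RV P >-> R}) :
  0 < p < 1 ->
  lam 1%N = 1 ->
  (forall n, (1 < n)%N -> 0 <= lam n /\ lam n <= lam n.-1) ->
  (forall n w, (1 <= n)%N -> r n w = 0 \/ r n w = 1) ->
  P [set w | r 1%N w = 1] = p%:E ->
  (forall n, (2 <= n)%N -> forall s : seq bool, size s = n.-1 ->
     P (hist_event (fun k => (r k : T -> R)) s `&` [set w | r n w = 1]) =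
     ((lam n * p + (1 - lam n) * seq_mean s)%:E * P (hist_event (fun k => (r k : T -> R)) s))%E) ->
  forall n, (1 <= n)%N ->
    ('E_P[pbar (fun k => (r k : T -> R)) n] = p%:E /\ 'E_P[r n] = p%:E)%E.
Proof.
move=> _ _ _ r01 h1 hyp.
have claim : forall n j, (1 <= j <= n)%N -> ('E_P[r j] = p%:E)%E.
  elim=> [|n IH] j; first by case: j.
  case/andP=> j1; rewrite leq_eqVlt => /orP [/eqP ->|]; last first.
    by rewrite ltnS => jn; apply: IH; rewrite j1.
  case: n IH => [|n] IH.
    rewrite (@Er _ _ _ _ r r01 1 0 (fun _ => p)) //.
      by rewrite -mulr_sumr (@sumq _ _ _ _ r r01) mulr1.
    by move=> s /size0nil ->; rewrite (@H_nil _ _ _ _ r) setTI probability_setT mule1.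
  have Ep : ('E_P[pbar (fun k => (r k : T -> R)) n.+1] = p%:E)%E.
    by apply: (@Epbar_lin _ _ _ _ r r01) => // i ilt; apply: IH; rewrite ltnS.
  move: Ep; rewrite (@Epbar _ _ _ _ r r01) => -[Emq].
  rewrite (@Er _ _ _ _ r r01 n.+2 n.+1
     (fun s => lam n.+2 * p + (1 - lam n.+2) * seq_mean s)) //; last first.
    by move=> s hs; apply: hyp.
  congr (_%:E).
  set a := lam n.+2 * p; set b := 1 - lam n.+2.
  have -> : \sum_(s <- allseqs n.+1) (a + b * seq_mean s) * q d T R P r s =
    a * \sum_(s <- allseqs n.+1) q d T R P r s +
    b * \sum_(s <- allseqs n.+1) seq_mean s * q d T R P r s.
    rewrite !mulr_sumr -big_split /=; apply: eq_bigr => s _; ring.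
  by rewrite (@sumq _ _ _ _ r r01) Emq /a /b; ring.
move=> n n1; split; last by apply: (claim n); rewrite n1 leqnn.
apply: (@Epbar_lin _ _ _ _ r r01) => // i ilt; apply: (claim n); by rewrite ltnS ilt.
Qed.
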